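(* Let $(R,\mathfrak{m},k)$ be a commutative Noetherian local ring and let $x,y\in\mathfrak{m}$. For any integer $n>\operatorname{s}(x,y)$ and any exact sequence of $R$-modules $0 \to (R/(x))^n \to M \to R/(y) \to 0$, the module $M$ has a direct summand isomorphic to $R/(x)$. In particular, $M$ is decomposable.
   Context: For $x,y\in\mathfrak{m}$, $\operatorname{s}(x,y)\in\{0,1,2,\dots\}\cup\{\infty\}$ is the supremum of the nonnegative integers $n$ such that there exists an ideal $I$ of $R$ whose image $I(R/(x,y))$ in $R/(x,y)$ has minimal number of generators (as an $R/(x,y)$-module) equal to $n$. *)

(* Defs.v *)
From HB Require Import structures.
From mathcomp Require Import all_boot all_order all_algebra.
From mathcomp Require Import boolp.
From mathcomp Require Import ring_quotient generic_quotient.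

Set Implicit Arguments.
Unset Strict Implicit.
Unset Printing Implicit Defensive.

Import GRing.Theory.
Local Open Scope ring_scope.
Local Open Scope quotient_scope.

Definition is_ideal (R : comNzRingType) (I : R -> Prop) : Prop :=
  [/\ I 0, (forall a b, I a -> I b -> I (a + b)) & (forall r a, I a -> I (r * a))].

Definition fin_gen_ideal (R : comNzRingType) (I : R -> Prop) : Prop :=
  exists m (a : 'I_m -> R),
    forall r, I r <-> exists c : 'I_m -> R, r = \sum_(i < m) c i * a i.

Definition noetherian_ring (R : comNzRingType) : Prop :=
  forall I : R -> Prop, is_ideal I -> fin_gen_ideal I.

(* Local (R is a nonzero ring): the non-units form an ideal, namely the
   unique maximal ideal m = { a | a is not a unit }. *)
Definition local_ring (R : comUnitRingType) : Prop :=
  forall a b : R, a \notin GRing.unit -> b \notin GRing.unit ->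
    a + b \notin GRing.unit.

Definition in_max_ideal (R : comUnitRingType) (a : R) : Prop :=
  a \notin GRing.unit.

(* The image I(R/(x,y)) of the ideal I in R/(x,y) can be generated, as an
   R/(x,y)-module, by m elements.  Elements of I(R/(x,y)) are the classes
   of elements of I and coefficients in R/(x,y) lift to R, so this says:
   there are a_0..a_{m-1} in I with I contained in (a_0..a_{m-1}) + (x,y). *)
Definition image_gen_by (R : comNzRingType) (x y : R) (I : R -> Prop) (m : nat)
  : Prop :=
  exists a : 'I_m -> R, (forall i, I (a i)) /\
    forall r, I r -> exists (c : 'I_m -> R) (s t : R),
      r = \sum_(i < m) c i * a i + s * x + t * y.

Definition min_gens_image (R : comNzRingType) (x y : R) (I : R -> Prop)
  (m : nat) : Prop :=
  image_gen_by x y I m /\ (forall m', (m' < m)%N -> ~ image_gen_by x y I m').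

(* s(x,y) < n, where s(x,y) is the supremum (in N ∪ {∞}) over all ideals I
   of the minimal number of generators of I(R/(x,y)). *)
Definition s_lt (R : comNzRingType) (x y : R) (n : nat) : Prop :=
  forall I : R -> Prop, is_ideal I ->
    forall m, min_gens_image x y I m -> (m < n)%N.

Section PrincipalQuotient.
Variables (R : comNzRingType) (x : R).

Definition pideal : {pred R} := fun r => `[< exists c : R, r = c * x >].

Lemma pidealP r : reflect (exists c, r = c * x) (r \in pideal).
Proof. exact: asboolP. Qed.

Fact pideal_zmod : zmod_closed pideal.
Proof.
split; first by apply/pidealP; exists 0; rewrite mul0r.
move=> a b /pidealP[c ->] /pidealP[d ->]; apply/pidealP.
by exists (c - d); rewrite mulrBl.
Qed.

HB.instance Definition _ := GRing.isZmodClosed.Build R pideal pideal_zmod.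

Definition quot_x := @Quotient.quot R pideal.

HB.instance Definition _ := GRing.Zmodule.on quot_x.
HB.instance Definition _ := Choice.on quot_x.

Definition qscale (r : R) (q : quot_x) : quot_x :=
  \pi_(quot_x) (r * repr q).

Lemma qscale_pi r a : qscale r (\pi_(quot_x) a) = \pi_(quot_x) (r * a).
Proof.
rewrite /qscale; apply/eqP; rewrite -(@Quotient.idealrBE R pideal).
have : repr (\pi_(quot_x) a) == a %[mod quot_x] by rewrite reprK.
rewrite -(@Quotient.idealrBE R pideal) => /pidealP[c Hc]; apply/pidealP.
by exists (r * c); rewrite -mulrBr Hc mulrA.
Qed.

Lemma pi_addx u v :
  \pi_(quot_x) (u + v) = \pi_(quot_x) u + \pi_(quot_x) v :> quot_x.
Proof. exact: Quotient.pi_add. Qed.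

Fact qscaleA a b v : qscale a (qscale b v) = qscale (a * b) v.
Proof. by elim/quotW: v => v; rewrite (qscale_pi b) (qscale_pi a) (qscale_pi (a * b)) mulrA. Qed.

Fact qscale1 : left_id 1 qscale.
Proof. by elim/quotW=> v; rewrite qscale_pi mul1r. Qed.

Fact qscaleDr : right_distributive qscale +%R.
Proof.
move=> a u v; elim/quotW: u => u; elim/quotW: v => v.
by rewrite -pi_addx (qscale_pi a u) (qscale_pi a v) (qscale_pi a (u + v)) mulrDr pi_addx.
Qed.

Fact qscaleDl v : {morph qscale^~ v : a b / a + b}.
Proof.
by move=> a b; elim/quotW: v => v; rewrite (qscale_pi a) (qscale_pi b) (qscale_pi (a + b)) mulrDl pi_addx.
Qed.

HB.instance Definition _ :=
  GRing.Zmodule_isLmodule.Build R quot_x qscaleA qscale1 qscaleDr qscaleDl.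

End PrincipalQuotient.

Definition quot_x_pow (R : comNzRingType) (x : R) (n : nat) : lmodType R :=
  {ffun 'I_n -> quot_x x}.

Definition is_submod (R : comNzRingType) (M : lmodType R) (N : M -> Prop) : Prop :=
  [/\ N 0, (forall u v, N u -> N v -> N (u + v)) & (forall r u, N u -> N (r *: u))].

Definition direct_sum_decomp (R : comNzRingType) (M : lmodType R)
  (N1 N2 : M -> Prop) : Prop :=
  [/\ is_submod N1, is_submod N2,
      (forall u, N1 u -> N2 u -> u = 0) &
      (forall m, exists u v, [/\ N1 u, N2 v & m = u + v])].

Definition submod_iso (R : comNzRingType) (M Q : lmodType R) (N : M -> Prop) : Prop :=
  exists f : {linear Q -> M}, injective f /\ (forall m, N m <-> exists q, m = f q).

Definition has_summand_iso (R : comNzRingType) (M Q : lmodType R) : Prop :=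
  exists N1 N2 : M -> Prop, direct_sum_decomp N1 N2 /\ submod_iso Q N1.

Definition decomposable (R : comNzRingType) (M : lmodType R) : Prop :=
  exists N1 N2 : M -> Prop, [/\ direct_sum_decomp N1 N2,
    (exists u, N1 u /\ u <> 0) & (exists v, N2 v /\ v <> 0)].

Definition short_exact (R : comNzRingType) (A M B : lmodType R)
  (f : {linear A -> M}) (g : {linear M -> B}) : Prop :=
  [/\ injective f, (forall b, exists m, g m = b) &
      (forall m, g m = 0 <-> exists a, m = f a)].

(* Main.v *)
Require Import Defs.
From HB Require Import structures.
From mathcomp Require Import all_boot all_order all_algebra.
From mathcomp Require Import boolp all_fingroup generic_quotient ring_quotient ring.

Set Implicit Arguments.
Unset Strict Implicit.
Unset Printing Implicit Defensive.
Import GRing.Theory.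
Local Open Scope ring_scope.
Local Open Scope quotient_scope.
Section PQ.
Variables (R : comNzRingType) (x : R).
Definition pq (a : R) : quot_x x := \pi_(quot_x x) a.

Lemma pq_eq a b : pq a = pq b <-> exists c, a - b = c * x.
Proof.
split.
  by move=> /eqP; rewrite -(@Quotient.idealrBE R (pideal x)) => /pidealP.
by move=> H; apply/eqP; rewrite -(@Quotient.idealrBE R (pideal x)); apply/pidealP.
Qed.

Lemma pqD a b : pq (a + b) = pq a + pq b.
Proof. exact: pi_addx. Qed.

Lemma pq0 : pq 0 = 0.
Proof. by apply: (@addrI _ (pq 0)); rewrite -pqD !addr0. Qed.

Lemma pqZ r a : r *: pq a = pq (r * a).
Proof. exact: qscale_pi. Qed.

Lemma pq_surj (q : quot_x x) : q = pq (repr q).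
Proof. by rewrite /pq reprK. Qed.

Lemma pq_sum (I : finType) (F : I -> R) : pq (\sum_i F i) = \sum_i pq (F i).
Proof. exact: (big_morph pq pqD pq0). Qed.

Lemma pq_x c : pq (c * x) = 0.
Proof. by rewrite -pq0; apply/pq_eq; exists c; rewrite subr0. Qed.

Variable n : nat.
Definition eps (j : 'I_n) (c : quot_x x) : quot_x_pow x n :=
  [ffun i => if i == j then c else 0].

Fact eps_linear j : linear (eps j).
Proof.
move=> a u v; apply/ffunP => i; rewrite !ffunE.
by case: (i == j); rewrite ?scaler0 ?addr0.
Qed.
HB.instance Definition _ j := GRing.isLinear.Build R (quot_x x) (quot_x_pow x n) _ (eps j) (eps_linear j).

Definition lam (e : 'I_n -> R) (z : quot_x_pow x n) : quot_x x := \sum_k e k *: z k.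

Fact lam_linear e : linear (lam e).
Proof.
move=> a u v; rewrite /lam scaler_sumr -big_split /=; apply: eq_bigr => k _.
by rewrite !ffunE scalerDr !scalerA mulrC.
Qed.
HB.instance Definition _ e := GRing.isLinear.Build R (quot_x_pow x n) (quot_x x) _ (lam e) (lam_linear e).

Lemma lam_eps e j c : lam e (eps j c) = e j *: c.
Proof.
rewrite /lam (bigD1 j) //= big1 ?addr0 ?ffunE ?eqxx // => k /negbTE Hk.
by rewrite ffunE Hk scaler0.
Qed.

Lemma eps_inj j : injective (eps j).
Proof. by move=> c d /ffunP /(_ j); rewrite !ffunE eqxx. Qed.
End PQ.

Section Loc.
Variables (R : comUnitRingType) (HL : local_ring R).
Definition nu (a : R) := a \notin GRing.unit.

Lemma nu0 : nu 0. Proof. by rewrite /nu unitr0. Qed.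
Lemma nuM r a : nu a -> nu (r * a).
Proof. by rewrite /nu unitrM negb_and => ->; rewrite orbT. Qed.
Lemma nuD a b : nu a -> nu b -> nu (a + b). Proof. exact: HL. Qed.
Lemma nuN a : nu a -> nu (- a). Proof. by rewrite /nu unitrN. Qed.
Lemma nu_unit a : nu (a - 1) -> a \is a GRing.unit.
Proof.
move=> H; apply/negPn/negP => Ha.
have := nuD Ha (nuN H); rewrite opprB addrC subrK /nu unitr1; done.
Qed.
Lemma nu_sum (I : finType) (P : pred I) (F : I -> R) :
  (forall i, P i -> nu (F i)) -> nu (\sum_(i | P i) F i).
Proof. move=> H; apply: (big_ind nu); [exact: nu0| exact: nuD| exact: H]. Qed.
Lemma nu_prod1 (I : finType) (F : I -> R) :
  (forall i, nu (F i - 1)) -> nu (\prod_i F i - 1).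
Proof.
move=> H; apply: (big_ind (fun a => nu (a - 1))) => //.
  by rewrite subrr; exact: nu0.
move=> a b Ha Hb.
have -> : a * b - 1 = a * (b - 1) + (a - 1) by rewrite mulrBr mulr1 addrA subrK.
by apply: nuD => //; apply: nuM.
Qed.

Lemma det_unit n (A : 'M[R]_n) :
  (forall i j, nu ((1%:M : 'M[R]_n) i j - A i j)) -> \det A \is a GRing.unit.
Proof.
move=> H; apply: nu_unit.
rewrite /determinant (bigD1 (1%g : {perm 'I_n})) //= odd_perm1 expr0 mul1r.
rewrite addrAC; apply: nuD.
  apply: nu_prod1 => i; rewrite perm1.
  have := nuN (H i i); rewrite mxE eqxx opprB; done.
apply: nu_sum => s Hs.
have [i Hi] : exists i, s i != i.
  apply/existsP; apply: contraR Hs; rewrite negb_exists => /forallP Hf.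
  by apply/eqP/permP => i; rewrite perm1; apply/eqP; have := Hf i; rewrite negbK.
rewrite (bigD1 i) //= mulrCA mulrC; apply: nuM.
have := nuN (H i (s i)); rewrite mxE eq_sym (negbTE Hi) sub0r opprK; done.
Qed.

Lemma det_pad m k (hk : (0 < k)%N) (C : 'M[R]_(m + k, m)) (D : 'M[R]_(m, m + k)) :
  \det (C *m D) = 0.
Proof.
have -> : C *m D = row_mx C (0 : 'M_(m + k, k)) *m col_mx D (0 : 'M_(k, m + k)).
  by rewrite mul_row_col mul0mx addr0.
rewrite det_mulmx.
rewrite (expand_det_row (col_mx D 0) (rshift m (Ordinal hk))) big1 ?mulr0 // => j _.
by rewrite col_mxEd mxE mul0r.
Qed.

Lemma key m n (lt : (m < n)%N) (C : 'M[R]_(n, m)) (D : 'M[R]_(m, n)) :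
  exists i k, ((1%:M - C *m D) i k) \is a GRing.unit.
Proof.
apply: contrapT => H.
suff : forall (C : 'M[R]_(n, m)) (D : 'M[R]_(m, n)),
   (forall i k, nu ((1%:M - C *m D) i k)) -> False.
  apply => i k; apply/negP => Hu; apply: H; exists i, k; exact: Hu.
have hk : (0 < (n - m)%N)%N by rewrite subn_gt0.
move: (n - m)%N hk (subnKC (ltnW lt)) => k hk <- {H C D} C D HC.
have := @det_unit _ (C *m D); rewrite det_pad // unitr0.
move=> K; suff: false by []; apply: K => i j; have := HC i j; by rewrite !mxE.
Qed.
End Loc.

Local Close Scope quotient_scope.
Theorem proposition3p5 (R : comUnitRingType)
  (HN : noetherian_ring R) (HL : local_ring R)
  (x y : R) (Hx : in_max_ideal x) (Hy : in_max_ideal y)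
  (n : nat) (Hn : s_lt x y n)
  (M : lmodType R)
  (f : {linear quot_x_pow x n -> M}) (g : {linear M -> quot_x y})
  (Hex : short_exact f g) :
  has_summand_iso M (quot_x x) /\ decomposable M.
Proof.
case: Hex => finj gsurj gker.
have gf : forall a, g (f a) = 0 by move=> a; apply/gker; exists a.
have [m0 gm0] := gsurj (pq y 1).
have [a ya] : exists a, y *: m0 = f a.
  apply/gker; rewrite linearZ /= gm0 pqZ mulr1; have := pq_x y 1; by rewrite mul1r.
pose alpha k := repr (a k).
have aE : forall k, a k = pq x (alpha k) by move=> k; exact: pq_surj.
pose I r := exists c : 'I_n -> R, r = \sum_k c k * alpha k.
have HI : is_ideal I.
  split.
  - by exists (fun _ => 0); rewrite big1 // => k _; rewrite mul0r.
  - move=> r1 r2 [c1 ->] [c2 ->]; exists (fun k => c1 k + c2 k).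
    by rewrite -big_split; apply: eq_bigr => k _; rewrite mulrDl.
  - move=> r r1 [c ->]; exists (fun k => r * c k).
    by rewrite mulr_sumr; apply: eq_bigr => k _; rewrite mulrA.
have alphaI : forall k, I (alpha k).
  move=> k; exists (fun i => (i == k)%:R).
  rewrite (bigD1 k) //= eqxx mul1r big1 ?addr0 // => i /negbTE ->; by rewrite mul0r.
have Hgen : image_gen_by x y I n.
  exists alpha; split => // r [c ->]; exists c, 0, 0.
  by rewrite !mul0r !addr0.
have [mm Hmm Hmin] : exists2 mm, image_gen_by x y I mm &
    forall m', (m' < mm)%N -> ~ image_gen_by x y I m'.
  have ex : exists k, `[< image_gen_by x y I k >] by exists n; apply/asboolP.
  case: (ex_minnP ex) => mm /asboolP H1 H2; exists mm => // m' lt' H.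
  by have := H2 m' (asboolT H); rewrite leqNgt lt'.
have lt : (mm < n)%N := Hn I HI mm (conj Hmm Hmin).
case: Hmm => b [bI bgen].
have [Df HD] := choice bI.
have : forall k, exists p : ('I_mm -> R) * R * R,
    alpha k = \sum_j p.1.1 j * b j + p.1.2 * x + p.2 * y.
  move=> k; have [c [s [t E]]] := bgen _ (alphaI k); by exists (c, s, t).
move=> /choice [Cp HC].
pose Cm : 'M[R]_(n, mm) := \matrix_(k, j) (Cp k).1.1 j.
pose Dm : 'M[R]_(mm, n) := \matrix_(j, k) Df j k.
have [i0 [j Hu]] := key HL lt Cm Dm.
pose e k := (1%:M - Cm *m Dm) i0 k.
pose s := (Cp i0).1.2; pose t := (Cp i0).2.
have He : \sum_k e k * alpha k = s * x + t * y.
  have -> : \sum_k e k * alpha k = alpha i0 - \sum_j (Cp i0).1.1 j * b j.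
    rewrite /e; under eq_bigr => k _ do rewrite !mxE mulrDl.
    rewrite big_split /= (bigD1 i0) //= eqxx mul1r big1 ?addr0; last first.
      by move=> k /negbTE; rewrite eq_sym => ->; rewrite mul0r.
    congr (_ + _); rewrite -sumrN.
    under eq_bigr => k _ do rewrite mulNr mulr_suml.
    rewrite (eq_bigr (fun k => \sum_i - (Cm i0 i * Dm i k * alpha k))); last first.
      by move=> k _; rewrite sumrN.
    rewrite exchange_big /=; apply: eq_bigr => jj _.
    rewrite HD mulr_sumr -sumrN; apply: eq_bigr => k _.
    by rewrite !mxE mulrA.
  by rewrite {1}HC /s /t; ring.
have Heu : (e j)^-1 * e j = 1 by rewrite mulVr.
set u := (e j)^-1 in Heu.
pose w := eps j (pq x (u * t)).
pose m1 := m0 - f w.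
pose a1 := a - y *: w.
have ya1 : y *: m1 = f a1.
  rewrite /m1 /a1 scalerBr ya linearB; congr (_ - _); rewrite linearZ. reflexivity.
have gm1 : g m1 = pq y 1 by rewrite /m1 linearB gf subr0.
have la1 : lam e a1 = 0.
  rewrite /a1 linearB linearZ /= lam_eps.
  change (lam e a - y *: (e j *: pq x (u * t)) = 0); rewrite (pqZ x (e j) (u * t)) (pqZ x y (e j * (u * t))).
  have -> : lam e a = pq x (t * y).
    rewrite /lam.
    under eq_bigr => k _ do rewrite aE pqZ.
    rewrite -pq_sum He; apply/pq_eq; exists s; rewrite addrK; done.
  by rewrite [e j * _]mulrA (mulrC (e j)) Heu mul1r mulrC subrr.
clearbody m1 a1.
have unitP1 : forall z : R, z \notin GRing.unit -> pq z 1 <> 0.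
  move=> z Hz E; rewrite -pq0 in E; have [c Hc] := (pq_eq _ _ _).1 E.
  rewrite subr0 in Hc; move/negP: Hz; apply; apply/unitrP; exists c; split; [by rewrite Hc | by rewrite mulrC Hc].
pose N1 := fun v : M => exists c, v = f (eps j c).
pose N2 := fun v : M => exists z r, lam e z = 0 /\ v = f z + r *: m1.
have Hds : direct_sum_decomp N1 N2.
  split.
  - split.
    + by exists 0; rewrite !linear0.
    + by move=> _ _ [c1 ->] [c2 ->]; exists (c1 + c2); rewrite !linearD.
    + by move=> r _ [c ->]; exists (r *: c); rewrite !linearZ.
  - split.
    + by exists 0, 0; rewrite !linear0 scale0r addr0.
    + move=> _ _ [z1 [r1 [h1 ->]]] [z2 [r2 [h2 ->]]]; exists (z1 + z2), (r1 + r2).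
      rewrite !linearD /= h1 h2 addr0; split => //; by rewrite scalerDl addrACA.
    + move=> r _ [z1 [r1 [h1 ->]]]; exists (r *: z1), (r * r1).
      split; first by rewrite linearZ /= h1 scaler0.
      rewrite scalerDr scalerA; congr (_ + _); rewrite linearZ; reflexivity.
  - move=> v [c ->] [z [r [hz E]]].
    have gE := congr1 g E.
    rewrite gf linearD gf add0r linearZ /= gm1 pqZ mulr1 -pq0 in gE.
    have [r' Hr'] := (pq_eq _ _ _).1 (esym gE); rewrite subr0 in Hr'.
    rewrite Hr' -scalerA ya1 -linearZ -linearD in E.
    have E2 := congr1 (lam e) (finj _ _ E).
    rewrite lam_eps linearD linearZ /= hz la1 scaler0 addr0 in E2.
    have -> : c = 0 by rewrite -(scale1r c) -Heu -scalerA E2 scaler0.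
    by rewrite !linear0.
  - move=> v.
    have Hq := pq_surj (g v).
    have : g (v - repr (g v) *: m1) = 0.
      by rewrite linearB linearZ /= gm1 pqZ mulr1 -Hq subrr.
    move=> /gker [w' Hw'].
    pose c := u *: lam e w'.
    exists (f (eps j c)), (f (w' - eps j c) + repr (g v) *: m1); split.
    + by exists c.
    + exists (w' - eps j c), (repr (g v)); split => //.
      by rewrite linearB /= lam_eps /c scalerA mulrC Heu scale1r subrr.
    + rewrite linearB -Hw'. rewrite addrAC addrNK subrKC.
      by [].
split.
  rewrite /has_summand_iso; exists N1; exists N2; split; first exact: Hds.
  exists (f \o eps j)%FUN; split.
    by move=> c d /= /finj /eps_inj.
  by move=> v; split => -[q ->]; exists q.
exists N1, N2; split => //.
  exists (f (eps j (pq x 1))); split; first by exists (pq x 1).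
  move=> E; apply: (unitP1 x Hx); apply: (eps_inj (j := j)); apply: finj.
  by rewrite E !linear0.
exists m1; split; first by exists 0, 1; rewrite !linear0 add0r scale1r.
by move=> E; apply: (unitP1 y Hy); rewrite -gm1 E linear0.
Qed.
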